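(* Let $\mathcal{R}=(W,\unlhd)$ be a poset regarded as a category (with an arrow $w\to v$ iff $w\unlhd v$), and let $\mathbf{Set}^{\mathcal{R}}$ be the topos of covariant presheaves on $\mathcal{R}$. Then $\mathbf{Set}^{\mathcal{R}}$ is scattered if and only if there is no infinite strictly ascending chain $w_0\lhd w_1\lhd w_2\lhd\cdots$ in $W$ (equivalently, the Alexandroff topology on $W$ whose opens are the $\unlhd$-upward closed sets is scattered), where $\lhd$ is the strict part of $\unlhd$.
   Context: An elementary topos with subobject classifier $\Omega$ is scattered if, in its Mitchell–Bénabou internal language, $\forall p{:}\Omega.((\divideontimes p\Rightarrow p)\Rightarrow p)$ is valid, where $\divideontimes p:=\forall t{:}\Omega.(t\vee(t\Rightarrow p))$. A topological space is scattered if each nonempty subset has an isolated point. *)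

(* Defs.v *)
(* We formalize the Mitchell-Benabou internal language
   (fragment: propositional connectives and quantification over Omega)
   through its Kripke-Joyal semantics in Set^R. *)

(* Omega(w) = the set of sieves (cosieves) on w in R: upward closed subsets
   of the principal up-set of w.  Restriction along w <= v is intersection
   with the up-set of v; since forcing only tests membership at stages >= v,
   restriction is represented by the same predicate. *)
Definition sieve {W : Type} (le : W -> W -> Prop) (w : W) (S : W -> Prop) : Prop :=
  (forall x, S x -> le w x) /\ (forall x y, S x -> le x y -> S y).

(* Formulas of the internal language whose variables range over Omega
   (de Bruijn indices). *)
Inductive form : Type :=
| FVar : nat -> form            (* the proposition  p = true  for p : Omega *)
| FTop : form
| FBot : form
| FAnd : form -> form -> form
| FOr  : form -> form -> form
| FImp : form -> form -> form
| FAll : form -> form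
| FEx  : form -> form.

Definition scons {A : Type} (a : A) (e : nat -> A) : nat -> A :=
  fun n => match n with 0 => a | S m => e m end.

Fixpoint forces {W : Type} (le : W -> W -> Prop) (w : W)
    (env : nat -> (W -> Prop)) (phi : form) : Prop :=
  match phi with
  | FVar n => env n w
  | FTop => True
  | FBot => False
  | FAnd a b => forces le w env a /\ forces le w env b
  | FOr a b => forces le w env a \/ forces le w env b
  | FImp a b => forall v, le w v -> forces le v env a -> forces le v env b
  | FAll a => forall v, le w v -> forall S, sieve le v S ->
                forces le v (scons S env) a
  | FEx a => exists S, sieve le w S /\ forces le w (scons S env) a
  end.

Definition valid {W : Type} (le : W -> W -> Prop) (phi : form) : Prop :=
  forall w, forces le w (fun _ _ => False) phi.

(* ※p := forall t : Omega. (t \/ (t => p)), with p the variable of index 0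
   in the outer context (index 1 under the binder). *)
Definition star_body : form := FOr (FVar 0) (FImp (FVar 0) (FVar 1)).

(* forall p : Omega. ((※p => p) => p) *)
Definition scattered_formula : form :=
  FAll (FImp (FImp (FAll star_body) (FVar 0)) (FVar 0)).

Definition scattered_presheaf_topos {W : Type} (le : W -> W -> Prop) : Prop :=
  valid le scattered_formula.

Definition strict {W : Type} (le : W -> W -> Prop) (x y : W) : Prop :=
  le x y /\ x <> y.

(* Main.v *)
Require Import Defs.
From Stdlib Require Import Classical ClassicalEpsilon.

Theorem theorem5p13 (W : Type) (le : W -> W -> Prop)
  (le_refl : forall x, le x x)
  (le_trans : forall x y z, le x y -> le y z -> le x z)
  (le_antisym : forall x y, le x y -> le y x -> x = y) :
  scattered_presheaf_topos le <->
  ~ (exists f : nat -> W, forall n, strict le (f n) (f (S n))).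
Proof.
  unfold scattered_presheaf_topos, valid, scattered_formula, star_body; simpl.
  split.
  - intros Hv [f Hf].
    set (Sv := fun x => le (f 0) x /\ ~ (exists n, le x (f n))).
    assert (HS : sieve le (f 0) Sv).
    { split. - intros x [h _]; exact h.
      - intros x y [h1 h2] hxy; split. + eauto.
        + intros [n hn]; apply h2; exists n; eauto. }
    assert (HSf : ~ Sv (f 0)).
    { intros [_ h]; apply h; exists 0; apply le_refl. }
    apply HSf.
    apply (Hv (f 0) (f 0) (le_refl _) Sv HS (f 0) (le_refl _)).
    intros u' hu' Hstar.
    apply NNPP; intros nS.
    assert (Hex : exists n, le u' (f n)).
    { apply NNPP; intros hn; apply nS; split; auto. }
    destruct Hex as [n hn].
    destruct (Hf n) as [h1 h2].
    assert (hs : le u' (f (S n))) by eauto.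
    assert (hne : u' <> f (S n)).
    { intros e; subst u'. apply h2. apply le_antisym; auto. }
    assert (HT : sieve le u' (fun x => le (f (S n)) x)).
    { split; intros; eauto. }
    destruct (Hstar u' (le_refl _) _ HT) as [hT | hT].
    + apply hne; apply le_antisym; auto.
    + simpl in hT.
      destruct (hT (f (S n)) hs (le_refl _)) as [_ hc].
      apply hc; exists (S n); apply le_refl.
  - intros Hnc w v hwv Sv HS u hvu H.
    apply NNPP; intros nSu.
    assert (step : forall x, le u x -> ~ Sv x ->
                   exists z, strict le x z /\ (le u z /\ ~ Sv z)).
    { intros x hux nSx. apply NNPP; intros hno. apply nSx.
      apply (H x hux). intros y hxy T HT.
      destruct (classic (T y)) as [hTy | hTy]; [left; exact hTy | right].
      simpl. intros z hyz hTz. apply NNPP; intros nSz. apply hno.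
      exists z. split; [split|split]; eauto.
      intros e; subst z. apply hTy.
      assert (y = x) by (apply le_antisym; eauto). subst; exact hTz. }
    pose (A := {x : W | le u x /\ ~ Sv x}).
    assert (g : forall a : A, {b : A | strict le (proj1_sig a) (proj1_sig b)}).
    { intros [x [h1 h2]].
      destruct (constructive_indefinite_description _ (step x h1 h2)) as [z [hz1 hz2]].
      exists (exist _ z hz2). exact hz1. }
    pose (a0 := exist (fun x => le u x /\ ~ Sv x) u (conj (le_refl u) nSu) : A).
    pose (F := fun n => Nat.iter n (fun a => proj1_sig (g a)) a0).
    apply Hnc. exists (fun n => proj1_sig (F n)).
    intros n. simpl. exact (proj2_sig (g (F n))).
Qed.
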